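(* The set $\mathcal{P}^{(+)}$ is path-connected.
   Context: Consider the continuous-time LTI system $\dot x = Ax + B_u u + B_d d$, $y = Cx + Dd$, with $x\in\mathbb{R}^n$, $u\in\mathbb{R}^m$, $d,y\in\mathbb{R}^p$ and real matrices of compatible dimensions. For $K\in\mathbb{R}^{m\times n}$ write $A_K = A-B_uK$. For a symmetric $P\in\mathbb{R}^{n\times n}$ let $$M_K(P)=\begin{bmatrix} A_K^\top P + PA_K & PB_d - C^\top\\ B_d^\top P - C & -D-D^\top\end{bmatrix}.$$ The condition $L_{\mathrm{s}}(D,K)$ (resp. $L_{\mathrm{ns}}(D,K)$) on $P$ means: if $D=0$, $A_K^\top P + PA_K\prec 0$ (resp. $\preceq 0$) and $B_d^\top P = C$; if $D\neq 0$, $M_K(P)\prec 0$ (resp. $\preceq 0$). The passivity region is $\mathcal{P}=\{K\in\mathbb{R}^{m\times n}:\exists P\succ 0 \text{ with } L_{\mathrm{ns}}(D,K)\}$ and the strict passivity region is $\mathcal{P}^+=\{K\in\mathbb{R}^{m\times n}:\exists P\succ 0\text{ with } L_{\mathrm{s}}(D,K)\}$. The notation $\mathcal{P}^{(+)}$ stands for either $\mathcal{P}$ or $\mathcal{P}^+$; the statement holds in both cases. (Standing assumption in the paper: $\mathcal{P}^{(+)}\neq\emptyset$.) *)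

(* Defs.v *)
From HB Require Import structures.
From mathcomp Require Import all_boot all_order all_algebra.
From mathcomp Require Import all_classical all_reals all_analysis.
Set Implicit Arguments. Unset Strict Implicit. Unset Printing Implicit Defensive.
Import Order.TTheory GRing.Theory Num.Theory.
Local Open Scope ring_scope.
Local Open Scope classical_set_scope.

Definition qform (R : realType) (k : nat) (M : 'M[R]_k) (x : 'rV[R]_k) : R :=
  (x *m M *m x^T) 0 0.

Definition symmetric (R : realType) (k : nat) (M : 'M[R]_k) : Prop := M^T = M.
Definition posdef (R : realType) (k : nat) (M : 'M[R]_k) : Prop :=
  symmetric M /\ forall x : 'rV[R]_k, x != 0 -> 0 < qform M x.
Definition negdef (R : realType) (k : nat) (M : 'M[R]_k) : Prop :=
  symmetric M /\ forall x : 'rV[R]_k, x != 0 -> qform M x < 0.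
Definition negsemidef (R : realType) (k : nat) (M : 'M[R]_k) : Prop :=
  symmetric M /\ forall x : 'rV[R]_k, qform M x <= 0.

Section System.
Variables (R : realType) (n m p : nat).
Variables (A : 'M[R]_n) (Bu : 'M[R]_(n, m)) (Bd : 'M[R]_(n, p))
          (C : 'M[R]_(p, n)) (D : 'M[R]_p).

Definition AK (K : 'M[R]_(m, n)) : 'M[R]_n := A - Bu *m K.

Definition MK (K : 'M[R]_(m, n)) (P : 'M[R]_n) : 'M[R]_(n + p) :=
  block_mx ((AK K)^T *m P + P *m AK K) (P *m Bd - C^T)
           (Bd^T *m P - C)             (- D - D^T).

(* L_s(D,K) (strict = true) and L_ns(D,K) (strict = false) on P *)
Definition Lcond (strict : bool) (K : 'M[R]_(m, n)) (P : 'M[R]_n) : Prop :=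
  if D == 0 then
    (if strict then negdef ((AK K)^T *m P + P *m AK K)
     else negsemidef ((AK K)^T *m P + P *m AK K)) /\ Bd^T *m P = C
  else
    (if strict then negdef (MK K P) else negsemidef (MK K P)).

Definition passivity_region (strict : bool) : set 'M[R]_(m, n) :=
  [set K | exists P : 'M[R]_n, posdef P /\ Lcond strict K P].
End System.

Definition path_connected_set (R : realType) (T : topologicalType) (S : set T) : Prop :=
  forall x y, S x -> S y ->
    exists f : R -> T,
      {within `[0, 1]%classic, continuous f} /\ f 0 = x /\ f 1 = y /\
      (forall t : R, 0 <= t <= 1 -> S (f t)).

(* Main.v *)
Require Import Defs.
From HB Require Import structures.
From mathcomp Require Import all_boot all_order all_algebra.
From mathcomp Require Import all_classical all_reals all_analysis.
From mathcomp Require Import fingroup perm.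
From mathcomp Require Import lra.
Import Order.TTheory GRing.Theory Num.Theory.
Local Open Scope ring_scope.
Local Open Scope classical_set_scope.
Set Implicit Arguments. Unset Strict Implicit.
Import numFieldNormedType.Exports.

Section Cont.
Variable R : realType.
Definition ctsat (t : R) (f : R -> R) := {for t, continuous f}.
Definition mcts {a b} (t : R) (F : R -> 'M[R]_(a, b)) := forall i j, ctsat t (fun x => F x i j).

Lemma mcts_cont a b (t : R) (F : R -> 'M[R]_(a, b)) : mcts t F -> {for t, continuous F}.
Proof.
move=> H; apply/cvgrPdist_le => /= e e0.
have Hall : \forall x \near t, forall ij : ('I_a * 'I_b)%type, `|F t ij.1 ij.2 - F x ij.1 ij.2| <= e.
  apply: (@filter_forall R ('I_a * 'I_b)%type (fun ij x => `|F t ij.1 ij.2 - F x ij.1 ij.2| <= e) (nbhs t) _) => -[i j] /=.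
  exact: ((cvgrPdist_le _ _).1 (H i j) e e0).
move: Hall; apply: filterS => x Hx.
rewrite /Num.Def.normr/= mx_normrE (bigmax_le _ (ltW e0))//= => ij _.
by rewrite !mxE; apply: Hx.
Qed.

Lemma ctsat_cst (t c : R) : ctsat t (fun=> c).
Proof. exact: cvg_cst. Qed.
Lemma ctsat_id (t : R) : ctsat t id.
Proof. exact: cvg_id. Qed.
Lemma ctsat_add (t : R) f g : ctsat t f -> ctsat t g -> ctsat t (fun x => f x + g x).
Proof. by move=> ? ?; apply: cvgD. Qed.
Lemma ctsat_opp (t : R) f : ctsat t f -> ctsat t (fun x => - f x).
Proof. by move=> ?; apply: cvgN. Qed.
Lemma ctsat_mul (t : R) f g : ctsat t f -> ctsat t g -> ctsat t (fun x => f x * g x).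
Proof. by move=> ? ?; apply: cvgM. Qed.
Lemma ctsat_inv (t : R) f : f t != 0 -> ctsat t f -> ctsat t (fun x => (f x)^-1).
Proof. by move=> ? ?; apply: cvgV. Qed.
Lemma ctsat_sum (I : finType) (t : R) (f : I -> R -> R) :
  (forall i, ctsat t (f i)) -> ctsat t (fun x => \sum_i f i x).
Proof.
move=> H; apply: (@cvg_big R I +%R 0 xpredT add_continuous) => // i _; exact: H.
Qed.
Lemma ctsat_prod (I : finType) (t : R) (f : I -> R -> R) :
  (forall i, ctsat t (f i)) -> ctsat t (fun x => \prod_i f i x).
Proof.
move=> H; apply: (@cvg_big R I *%R 1 xpredT mul_continuous) => // i _; exact: H.
Qed.
Lemma ctsat_ext (t : R) f g : (forall x, f x = g x) -> ctsat t f -> ctsat t g.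
Proof. by move=> /funext ->. Qed.

Lemma mcts_add a b (t : R) (F G : R -> 'M[R]_(a, b)) : mcts t F -> mcts t G -> mcts t (fun x => F x + G x).
Proof. move=> HF HG i j; apply: (@ctsat_ext t (fun x => F x i j + G x i j)) => [x|]; first by rewrite mxE.
by apply: ctsat_add. Qed.
Lemma mcts_scale a b (t : R) (c : R -> R) (F : R -> 'M[R]_(a, b)) : ctsat t c -> mcts t F -> mcts t (fun x => c x *: F x).
Proof. move=> Hc HF i j; apply: (@ctsat_ext t (fun x => c x * F x i j)) => [x|]; first by rewrite mxE.
by apply: ctsat_mul. Qed.
Lemma mcts_cst a b (t : R) (M : 'M[R]_(a, b)) : mcts t (fun=> M).
Proof. by move=> i j; apply: ctsat_cst. Qed.
Lemma mcts_mul a b c (t : R) (F : R -> 'M[R]_(a, b)) (G : R -> 'M[R]_(b, c)) : mcts t F -> mcts t G -> mcts t (fun x => F x *m G x).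
Proof. move=> HF HG i j; apply: (@ctsat_ext t (fun x => \sum_k F x i k * G x k j)) => [x|]; first by rewrite mxE.
by apply: ctsat_sum => k; apply: ctsat_mul. Qed.
Lemma mcts_det a (t : R) (F : R -> 'M[R]_a) : mcts t F -> ctsat t (fun x => \det (F x)).
Proof. move=> HF; apply: (@ctsat_ext t (fun x => \sum_(s : 'S_a) (-1) ^+ s * \prod_i F x i (s i))) => [x|]; first by [].
apply: ctsat_sum => s; apply: ctsat_mul; first exact: ctsat_cst.
by apply: ctsat_prod => i; apply: HF. Qed.
Lemma mcts_adj a (t : R) (F : R -> 'M[R]_a) : mcts t F -> mcts t (fun x => \adj (F x)).
Proof. move=> HF i j; apply: (@ctsat_ext t (fun x => (-1) ^+ (j + i) * \det (row' j (col' i (F x))))) => [x|].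
  by rewrite mxE.
apply: ctsat_mul; first exact: ctsat_cst.
apply: mcts_det => k l; apply: (@ctsat_ext t (fun x => F x (lift j k) (lift i l))) => [x|]; first by rewrite !mxE.
exact: HF.
Qed.
End Cont.

Section Alg.
Variable R : realType.

Lemma qform_tr k (X M : 'M[R]_k) (x : 'rV[R]_k) :
  qform (X^T *m M *m X) x = qform M (x *m X^T).
Proof. by rewrite /qform trmx_mul trmxK !mulmxA. Qed.

Lemma qform_comb k (a b : R) (M N : 'M[R]_k) x :
  qform (a *: M + b *: N) x = a * qform M x + b * qform N x.
Proof.
by rewrite /qform mulmxDr mulmxDl -!scalemxAr -!scalemxAl !mxE.
Qed.

Lemma cong_nsd k (X M : 'M[R]_k) : negsemidef M -> negsemidef (X^T *m M *m X).
Proof.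
move=> [sM HM]; split; last by move=> x; rewrite qform_tr.
by rewrite /Defs.symmetric in sM *; rewrite !trmx_mul trmxK sM mulmxA.
Qed.

Lemma unit_tr_nz k (X : 'M[R]_k) (x : 'rV[R]_k) : X \in unitmx -> x != 0 -> x *m X^T != 0.
Proof.
move=> uX; apply: contraNneq => H.
have uXt : X^T \in unitmx by rewrite unitmx_tr.
by rewrite -(mulmxK uXt x) H mul0mx.
Qed.

Lemma cong_nd k (X M : 'M[R]_k) : X \in unitmx -> negdef M -> negdef (X^T *m M *m X).
Proof.
move=> uX [sM HM]; split; last by move=> x x0; rewrite qform_tr; apply: HM; apply: unit_tr_nz.
by rewrite /Defs.symmetric in sM *; rewrite !trmx_mul trmxK sM mulmxA.
Qed.

Lemma cong_back k (X M : 'M[R]_k) : X \in unitmx ->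
  M = (invmx X)^T *m (X^T *m M *m X) *m invmx X.
Proof.
move=> uX; rewrite trmx_inv !mulmxA mulVmx ?unitmx_tr // mul1mx.
by rewrite -mulmxA mulmxV // mulmx1.
Qed.

Lemma posdef_unit k (P : 'M[R]_k) : posdef P -> P \in unitmx.
Proof.
move=> [_ HP]; rewrite unitmxE unitfE; apply/negP => /det0P [v v0 vP].
have := HP v v0; by rewrite /qform vP mul0mx mxE ltxx.
Qed.

Lemma posdef_inv k (P : 'M[R]_k) : posdef P -> posdef (invmx P).
Proof.
move=> hP; have uP := posdef_unit hP; case: hP => sP HP; split.
  by rewrite /Defs.symmetric in sP *; rewrite trmx_inv sP.
move=> x x0.
have -> : invmx P = (invmx P)^T *m P *m invmx P.
  by rewrite trmx_inv sP mulVmx // mul1mx.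
rewrite qform_tr; apply: HP; apply: unit_tr_nz => //; by rewrite unitmx_inv.
Qed.

Lemma comb_nsd k (a b : R) (M N : 'M[R]_k) : 0 <= a -> 0 <= b ->
  negsemidef M -> negsemidef N -> negsemidef (a *: M + b *: N).
Proof.
move=> a0 b0 [sM HM] [sN HN]; split.
  by rewrite /Defs.symmetric in sM sN *; rewrite linearD /= !linearZ /= sM sN.
move=> x; rewrite qform_comb.
have := HM x; have := HN x; nra.
Qed.

Lemma comb_nd k (a b : R) (M N : 'M[R]_k) : 0 <= a -> 0 <= b -> a + b = 1 ->
  negdef M -> negdef N -> negdef (a *: M + b *: N).
Proof.
move=> a0 b0 ab [sM HM] [sN HN]; split.
  by rewrite /Defs.symmetric in sM sN *; rewrite linearD /= !linearZ /= sM sN.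
move=> x x0; rewrite qform_comb.
have h1 := HM x x0; have h2 := HN x x0.
set u := qform M x in h1 *; set v := qform N x in h2 *.
have hm : Num.max u v < 0 by rewrite gt_max h1 h2.
have e1 : a * u <= a * Num.max u v by rewrite ler_wpM2l // le_max lexx.
have e2 : b * v <= b * Num.max u v by rewrite ler_wpM2l // le_max lexx orbT.
have e3 : a * Num.max u v + b * Num.max u v = Num.max u v by rewrite -mulrDl ab mul1r.
lra.
Qed.

Lemma comb_pd k (a b : R) (M N : 'M[R]_k) : 0 <= a -> 0 <= b -> a + b = 1 ->
  posdef M -> posdef N -> posdef (a *: M + b *: N).
Proof.
move=> a0 b0 ab [sM HM] [sN HN]; split.
  by rewrite /Defs.symmetric in sM sN *; rewrite linearD /= !linearZ /= sM sN.
move=> x x0; rewrite qform_comb.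
have h1 := HM x x0; have h2 := HN x x0.
set u := qform M x in h1 *; set v := qform N x in h2 *.
have hm : Num.min u v > 0 by rewrite lt_min h1 h2.
have e1 : a * Num.min u v <= a * u by rewrite ler_wpM2l // ge_min lexx.
have e2 : b * Num.min u v <= b * v by rewrite ler_wpM2l // ge_min lexx orbT.
have e3 : a * Num.min u v + b * Num.min u v = Num.min u v by rewrite -mulrDl ab mul1r.
lra.
Qed.
End Alg.

Lemma h8 (V : zmodType) (x0 x1 y0 y1 z0 z1 w0 w1 : V) :
  (x0+x1)+(y0+y1)-(z0+z1)-(w0+w1) = (x0+y0-z0-w0) + (x1+y1-z1-w1).
Proof. by rewrite (addrACA (x0+y0-z0)) (addrACA (x0+y0)) (addrACA x0) -!opprD. Qed.
Lemma hc (R : ringType) (V : lmodType R) (a b : R) (u f0 f1 : V) : a + b = 1 ->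
  a *: (u - f0) + b *: (u - f1) = u - (a *: f0 + b *: f1).
Proof. by move=> ab; rewrite !scalerBr addrACA -scalerDl ab scale1r opprD. Qed.
Lemma hc0 (R : ringType) (V : lmodType R) (a b : R) (u : V) : a + b = 1 ->
  a *: u + b *: u = u.
Proof. by move=> ab; rewrite -scalerDl ab scale1r. Qed.

Lemma h4 (V : zmodType) (a b c d : V) : a - b + (c - d) = c + a - d - b.
Proof. by rewrite addrACA -[RHS]addrA [c + a]addrC [- d - b]addrC. Qed.

Section Sys.
Variables (R : realType) (n m p : nat).
Variables (A : 'M[R]_n) (Bu : 'M[R]_(n, m)) (Bd : 'M[R]_(n, p))
          (C : 'M[R]_(p, n)) (D : 'M[R]_p).

Definition NQ (Q : 'M[R]_n) (Y : 'M[R]_(m, n)) : 'M[R]_n :=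
  A *m Q + Q *m A^T - Bu *m Y - Y^T *m Bu^T.
Definition BQ Q Y : 'M[R]_(n + p) :=
  block_mx (NQ Q Y) (Bd - Q *m C^T) (Bd^T - C *m Q) (- D - D^T).

Lemma key1 (P : 'M[R]_n) K : P^T = P -> P \in unitmx ->
  (AK A Bu K)^T *m P + P *m AK A Bu K = P^T *m NQ (invmx P) (K *m invmx P) *m P.
Proof.
move=> sP uP.
have QP : invmx P *m P = 1%:M by rewrite mulVmx.
have PQ : P *m invmx P = 1%:M by rewrite mulmxV.
have sQ : (invmx P)^T = invmx P by rewrite trmx_inv sP.
rewrite sP /AK /NQ !linearB /= !trmx_mul sQ.
rewrite !(mulmxDr, mulmxDl, mulmxBr, mulmxBl, mulmxN, mulNmx) !mulmxA.
rewrite -!(mulmxA _ (invmx P) P) !QP !mulmx1 PQ !mul1mx.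
exact: h4.
Qed.

Lemma key2 (P : 'M[R]_n) K : P^T = P -> P \in unitmx ->
  MK A Bu Bd C D K P =
  (block_mx P 0 0 1%:M)^T *m BQ (invmx P) (K *m invmx P) *m block_mx P 0 0 1%:M.
Proof.
move=> sP uP.
have PQ : P *m invmx P = 1%:M by rewrite mulmxV.
rewrite /MK /BQ tr_block_mx !trmx0 trmx1 sP !mulmx_block.
rewrite !(mul0mx, mulmx0, addr0, add0r, mul1mx, mulmx1).
have QP : invmx P *m P = 1%:M by rewrite mulVmx.
rewrite key1 // sP; congr block_mx.
  by rewrite mulmxBr mulmxA PQ mul1mx.
by rewrite mulmxBl -mulmxA QP mulmx1.
Qed.

Definition Gc (strict : bool) Q Y : Prop :=
  if D == 0 then
    (if strict then negdef (NQ Q Y) else negsemidef (NQ Q Y)) /\ C *m Q = Bd^T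
  else (if strict then negdef (BQ Q Y) else negsemidef (BQ Q Y)).

Lemma cong_iff_nd k (X M : 'M[R]_k) : X \in unitmx -> negdef M <-> negdef (X^T *m M *m X).
Proof.
move=> uX; split; first exact: cong_nd.
by move=> H; rewrite (cong_back M uX); apply: cong_nd => //; rewrite unitmx_inv.
Qed.

Lemma cong_iff_nsd k (X M : 'M[R]_k) : X \in unitmx -> negsemidef M <-> negsemidef (X^T *m M *m X).
Proof.
move=> uX; split; first exact: cong_nsd.
by move=> H; rewrite (cong_back M uX); apply: cong_nsd.
Qed.

Lemma Lequiv strict (P : 'M[R]_n) K : posdef P ->
  Lcond A Bu Bd C D strict K P <-> Gc strict (invmx P) (K *m invmx P).
Proof.
move=> hP; have uP := posdef_unit hP; have sP : P^T = P by case: hP.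
have uD2 : block_mx P 0 0 (1%:M : 'M[R]_p) \in unitmx.
  by rewrite unitmxE det_ublock det1 mulr1 -unitmxE.
have k3 : Bd^T *m P = C <-> C *m invmx P = Bd^T.
  by split => H; rewrite -H ?mulmxK ?mulmxKV.
rewrite /Lcond /Gc; case: (D == 0).
  rewrite key1 //; case: strict.
    by rewrite -cong_iff_nd // k3.
  by rewrite -cong_iff_nsd // k3.
rewrite key2 //; case: strict.
  by rewrite -cong_iff_nd.
by rewrite -cong_iff_nsd.
Qed.

Lemma NQ_comb a b Q0 Q1 Y0 Y1 :
  NQ (a *: Q0 + b *: Q1) (a *: Y0 + b *: Y1) = a *: NQ Q0 Y0 + b *: NQ Q1 Y1.
Proof.
rewrite /NQ !(scalerBr, scalerDr) -h8.
rewrite !(mulmxDr, mulmxDl, linearD) /= -!scalemxAr -!scalemxAl !linearZ /= -!scalemxAl.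
by rewrite !scalerN.
Qed.

Lemma BQ_comb a b Q0 Q1 Y0 Y1 : a + b = 1 ->
  BQ (a *: Q0 + b *: Q1) (a *: Y0 + b *: Y1) = a *: BQ Q0 Y0 + b *: BQ Q1 Y1.
Proof.
move=> ab; rewrite /BQ !scale_block_mx add_block_mx NQ_comb hc0 // !hc //.
by rewrite mulmxDl mulmxDr -!scalemxAl -!scalemxAr.
Qed.

Lemma Gc_comb strict a b Q0 Q1 Y0 Y1 : 0 <= a -> 0 <= b -> a + b = 1 ->
  Gc strict Q0 Y0 -> Gc strict Q1 Y1 -> Gc strict (a *: Q0 + b *: Q1) (a *: Y0 + b *: Y1).
Proof.
move=> a0 b0 ab; rewrite /Gc; case: (D == 0).
  rewrite NQ_comb; case: strict => -[H0 E0] [H1 E1]; (split; last by rewrite mulmxDr -!scalemxAr E0 E1 hc0).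
    exact: comb_nd.
  exact: comb_nsd.
rewrite BQ_comb //; case: strict => H0 H1.
  exact: comb_nd.
exact: comb_nsd.
Qed.
End Sys.


Theorem lemma4 (R : realType) (n m p : nat)
  (A : 'M[R]_n) (Bu : 'M[R]_(n, m)) (Bd : 'M[R]_(n, p))
  (C : 'M[R]_(p, n)) (D : 'M[R]_p) (strict : bool) :
  passivity_region A Bu Bd C D strict !=set0 ->
  @path_connected_set R ('M[R]_(m, n) : normedModType R) (passivity_region A Bu Bd C D strict).
Proof.
move=> _ K0 K1 [P0 [hP0 L0]] [P1 [hP1 L1]].
have G0 := (Lequiv A Bu Bd C D strict K0 hP0).1 L0; have G1 := (Lequiv A Bu Bd C D strict K1 hP1).1 L1.
set Q0 := invmx P0 in G0; set Q1 := invmx P1 in G1.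
set Y0 := K0 *m Q0 in G0; set Y1 := K1 *m Q1 in G1.
have pQ0 : posdef Q0 by apply: posdef_inv.
have pQ1 : posdef Q1 by apply: posdef_inv.
pose Qt (x : R) := (1 - x) *: Q0 + x *: Q1.
pose Yt (x : R) := (1 - x) *: Y0 + x *: Y1.
pose f (x : R) := (\det (Qt x))^-1 *: (Yt x *m \adj (Qt x)).
have Hin x : 0 <= x <= 1 -> posdef (Qt x) /\ Gc A Bu Bd C D strict (Qt x) (Yt x).
  move=> /andP[x0 x1]; have a0 : 0 <= 1 - x by rewrite subr_ge0.
  have ab : 1 - x + x = 1 by rewrite subrK.
  split; first exact: comb_pd.
  exact: Gc_comb.
have fE x : 0 <= x <= 1 -> f x = Yt x *m invmx (Qt x).
  move=> /Hin [/posdef_unit uQ _].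
  by rewrite /f /invmx uQ scalemxAr.
have Q0E : Qt 0 = Q0 by rewrite /Qt subr0 scale1r scale0r addr0.
have Y0E : Yt 0 = Y0 by rewrite /Yt subr0 scale1r scale0r addr0.
have Q1E : Qt 1 = Q1 by rewrite /Qt subrr scale0r add0r scale1r.
have Y1E : Yt 1 = Y1 by rewrite /Yt subrr scale0r add0r scale1r.
have l01 : 0 <= (0:R) <= 1 by apply/andP; split; rewrite ?lexx ?ler01.
have l11 : 0 <= (1:R) <= 1 by apply/andP; split; rewrite ?lexx ?ler01.
exists f; split; last split; last split.
- apply: continuous_in_subspaceT => x.
  move=> /set_mem /=; rewrite in_itv /= => xin.
  have [/posdef_unit uQ _] := Hin x xin.
  have mQ : mcts x Qt.
    apply: mcts_add; apply: mcts_scale; try exact: mcts_cst.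
      apply: ctsat_add; first exact: ctsat_cst.
      by move: (ctsat_opp (ctsat_id (t:=x))).
    exact: ctsat_id.
  have mY : mcts x Yt.
    apply: mcts_add; apply: mcts_scale; try exact: mcts_cst.
      apply: ctsat_add; first exact: ctsat_cst.
      by move: (ctsat_opp (ctsat_id (t:=x))).
    exact: ctsat_id.
  apply: mcts_cont; apply: mcts_scale.
    apply: ctsat_inv; first by rewrite -unitfE -unitmxE.
    exact: mcts_det.
  apply: mcts_mul => //; exact: mcts_adj.
- by rewrite fE // Q0E Y0E /Y0 mulmxK //; apply: posdef_unit.
- by rewrite fE // Q1E Y1E /Y1 mulmxK //; apply: posdef_unit.
move=> t tin; have [pQ Gt] := Hin t tin.
have uQ := posdef_unit pQ.
exists (invmx (Qt t)); split; first exact: posdef_inv.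
apply/(Lequiv A Bu Bd C D strict _ (posdef_inv pQ)).
by rewrite invmxK fE // mulmxKV.
Qed.
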